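(* For all constants $a_1,b_1,a_2,b_2>0$, with $C_1,C_2$ as defined in the context, $\sup_{\omega\ge0}|C_1(j\omega)C_2(j\omega)|\le 1$.
   Context: For constants $a_1,b_1,a_2,b_2>0$ and complex $s$, set $p_1(s)=a_1+b_1 s$, $p_2(s)=a_2+b_2 s$, $q=p_1+p_2$, and $m(s)=(s^2+q)\sqrt{1-\frac{4p_1p_2}{(s^2+q)^2}}$ with $\sqrt{\cdot}$ the principal complex square root (nonnegative real part), so $m^2=(s^2+q)^2-4p_1p_2$. Define $C_1=\frac{(s^2+q)-m}{2p_2}$ and $C_2=\frac{(s^2+q)-m}{2p_1}$. $j$ denotes the imaginary unit. *)

(* Defs.v *)
From Stdlib Require Import Reals Lra.
Open Scope R_scope.

Definition C : Type := (R * R)%type.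
Definition RtoC (x : R) : C := (x, 0).
Definition Cj : C := (0, 1).
Definition Cadd (z w : C) : C := (fst z + fst w, snd z + snd w).
Definition Copp (z : C) : C := (- fst z, - snd z).
Definition Csub (z w : C) : C := Cadd z (Copp w).
Definition Cmul (z w : C) : C :=
  (fst z * fst w - snd z * snd w, fst z * snd w + snd z * fst w).
Definition Cinv (z : C) : C :=
  let d := fst z ^ 2 + snd z ^ 2 in (fst z / d, - snd z / d).
Definition Cdiv (z w : C) : C := Cmul z (Cinv w).
Definition Cmod (z : C) : R := sqrt (fst z ^ 2 + snd z ^ 2).

(* Principal square root: the root with nonnegative real part; on the
   branch cut (negative reals) it returns j*sqrt(-x). *)
Definition Csqrt (z : C) : C :=
  let r := Cmod z in
  (sqrt ((r + fst z) / 2),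
   if Rle_dec 0 (snd z) then sqrt ((r - fst z) / 2)
   else - sqrt ((r - fst z) / 2)).

(* p1(s) = a1 + b1 s, p2(s) = a2 + b2 s, q = p1 + p2 *)
Definition p_lin (a b : R) (s : C) : C := Cadd (RtoC a) (Cmul (RtoC b) s).
Definition qf (a1 b1 a2 b2 : R) (s : C) : C := Cadd (p_lin a1 b1 s) (p_lin a2 b2 s).
Definition s2q (a1 b1 a2 b2 : R) (s : C) : C := Cadd (Cmul s s) (qf a1 b1 a2 b2 s).

Definition mf (a1 b1 a2 b2 : R) (s : C) : C :=
  let t := s2q a1 b1 a2 b2 s in
  Cmul t (Csqrt (Csub (RtoC 1)
     (Cdiv (Cmul (RtoC 4) (Cmul (p_lin a1 b1 s) (p_lin a2 b2 s))) (Cmul t t)))).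

Definition C1f (a1 b1 a2 b2 : R) (s : C) : C :=
  Cdiv (Csub (s2q a1 b1 a2 b2 s) (mf a1 b1 a2 b2 s)) (Cmul (RtoC 2) (p_lin a2 b2 s)).
Definition C2f (a1 b1 a2 b2 : R) (s : C) : C :=
  Cdiv (Csub (s2q a1 b1 a2 b2 s) (mf a1 b1 a2 b2 s)) (Cmul (RtoC 2) (p_lin a1 b1 s)).

(* Main.v *)
Require Import Defs.
From Stdlib Require Import Reals Lra Psatz.
Open Scope R_scope.

Lemma Cmod_ge0 z : 0 <= Cmod z.
Proof. unfold Cmod; apply sqrt_pos. Qed.

Lemma Cmod_mul a b : Cmod (Cmul a b) = Cmod a * Cmod b.
Proof.
  destruct a as [x y], b as [u v]; unfold Cmod, Cmul; simpl.
  rewrite <- sqrt_mult by nra. f_equal; ring.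
Qed.

Lemma Cmod_inv a : fst a ^ 2 + snd a ^ 2 <> 0 -> Cmod (Cinv a) = / Cmod a.
Proof.
  intro H.
  assert (E : Cmul (Cinv a) a = (1,0)).
  { destruct a as [x y]; unfold Cmul, Cinv; simpl in *; f_equal; field; lra. }
  assert (E2 : Cmod (Cinv a) * Cmod a = 1).
  { rewrite <- Cmod_mul, E; unfold Cmod; simpl.
    transitivity (sqrt 1); [f_equal; ring | apply sqrt_1]. }
  assert (Cmod a <> 0) by (intro Z; rewrite Z in E2; lra).
  apply (Rmult_eq_reg_r (Cmod a)); auto. rewrite E2. field; auto.
Qed.

Lemma Csqrt_sq z : Cmul (Csqrt z) (Csqrt z) = z.
Proof.
  destruct z as [a b]. unfold Csqrt, Cmul. simpl.
  set (r := Cmod (a, b)).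
  assert (Hr2 : r * r = a^2 + b^2).
  { unfold r, Cmod; simpl. apply sqrt_sqrt. nra. }
  assert (Hr0 : 0 <= r) by apply Cmod_ge0.
  assert (H1 : 0 <= (r + a) / 2) by nra.
  assert (H2 : 0 <= (r - a) / 2) by nra.
  pose proof (sqrt_sqrt _ H1) as S1. pose proof (sqrt_sqrt _ H2) as S2.
  pose proof (sqrt_pos ((r + a) / 2)) as P1. pose proof (sqrt_pos ((r - a) / 2)) as P2.
  set (x := sqrt ((r + a) / 2)) in *. set (y := sqrt ((r - a) / 2)) in *.
  assert (Hxy : 2 * (x * y) = Rabs b).
  { apply Rsqr_inj. nra. apply Rabs_pos. rewrite <- Rsqr_abs. unfold Rsqr.
    replace (2 * (x * y) * (2 * (x * y))) with (4 * (x * x) * (y * y)) by ring.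
    rewrite S1, S2. nra. }
  destruct (Rle_dec 0 b).
  - rewrite Rabs_right in Hxy by lra. f_equal; nra.
  - rewrite Rabs_left in Hxy by lra. f_equal; nra.
Qed.

Lemma Csqrt_re z : 0 <= fst (Csqrt z).
Proof. unfold Csqrt; simpl; apply sqrt_pos. Qed.

Definition C1 : Defs.C := (1, 0).

Lemma core (T P1 P2 : Defs.C) :
  fst P1 ^ 2 + snd P1 ^ 2 <> 0 -> fst P2 ^ 2 + snd P2 ^ 2 <> 0 ->
  let u := Csqrt (Csub (RtoC 1) (Cdiv (Cmul (RtoC 4) (Cmul P1 P2)) (Cmul T T))) in
  let m := Cmul T u in
  Cmod (Cmul (Cdiv (Csub T m) (Cmul (RtoC 2) P2))
             (Cdiv (Csub T m) (Cmul (RtoC 2) P1))) <= 1.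
Proof.
  intros HP1 HP2 u m.
  assert (HTm : Csub T m = Cmul T (Csub C1 u)).
  { unfold m; destruct T, u; unfold Csub, Cadd, Copp, Cmul, C1; simpl; f_equal; ring. }
  assert (N2 : forall P : Defs.C, fst P ^ 2 + snd P ^ 2 <> 0 ->
            fst (Cmul (RtoC 2) P) ^ 2 + snd (Cmul (RtoC 2) P) ^ 2 <> 0).
  { intros [x y] H; unfold Cmul, RtoC; simpl in *. intro Z. apply H. nra. }
  unfold Cdiv. rewrite !Cmod_mul, !Cmod_inv by auto. rewrite HTm, Cmod_mul.
  set (A := Cmod T). set (B := Cmod (Csub C1 u)).
  set (E := Cmod (Cmul (RtoC 2) P2) * Cmod (Cmul (RtoC 2) P1)).
  assert (HA : 0 <= A) by apply Cmod_ge0. assert (HB : 0 <= B) by apply Cmod_ge0.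
  assert (HE1 : 0 < Cmod (Cmul (RtoC 2) P2)).
  { destruct (Cmod_ge0 (Cmul (RtoC 2) P2)) as [h|h]; auto.
    exfalso; apply (N2 P2 HP2). unfold Cmod in h. symmetry in h.
    apply sqrt_eq_0 in h; auto. nra. }
  assert (HE2 : 0 < Cmod (Cmul (RtoC 2) P1)).
  { destruct (Cmod_ge0 (Cmul (RtoC 2) P1)) as [h|h]; auto.
    exfalso; apply (N2 P1 HP1). unfold Cmod in h. symmetry in h.
    apply sqrt_eq_0 in h; auto. nra. }
  assert (HE : 0 < E) by (unfold E; nra).
  replace (A * B * / Cmod (Cmul (RtoC 2) P2) * (A * B * / Cmod (Cmul (RtoC 2) P1)))
    with (A * A * B * B / E) by (unfold E; field; lra).
  apply (Rmult_le_reg_r E); auto. unfold Rdiv. rewrite Rmult_assoc, Rinv_l, Rmult_1_l, Rmult_1_r by lra.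
  destruct (Req_dec A 0) as [A0|A0].
  { rewrite A0; lra. }
  set (D := Cmod (Cadd C1 u)).
  assert (HD : 0 <= D) by apply Cmod_ge0.
  assert (HBD : B <= D).
  { unfold B, D, Cmod. apply sqrt_le_1_alt. pose proof (Csqrt_re (Csub (RtoC 1)
      (Cdiv (Cmul (RtoC 4) (Cmul P1 P2)) (Cmul T T)))) as Hr. fold u in Hr.
    destruct u as [u1 u2]; unfold Csub, Cadd, Copp, C1; simpl in *. nra. }
  assert (HTT : fst (Cmul T T) ^ 2 + snd (Cmul T T) ^ 2 <> 0).
  { intro Z. apply A0. unfold A, Cmod. destruct T as [t1 t2]; simpl in *.
    transitivity (sqrt 0); [f_equal; nra | apply sqrt_0]. }
  assert (HEq : Cmul (Cmul (RtoC 2) P2) (Cmul (RtoC 2) P1)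
                = Cmul (Cmul T T) (Cmul (Csub C1 u) (Cadd C1 u))).
  { assert (Hu : Cmul u u = Csub (RtoC 1) (Cdiv (Cmul (RtoC 4) (Cmul P1 P2)) (Cmul T T)))
      by (unfold u; apply Csqrt_sq).
    replace (Cmul (Csub C1 u) (Cadd C1 u)) with (Csub C1 (Cmul u u))
      by (destruct u; unfold Csub, Cadd, Copp, Cmul, C1; simpl; f_equal; ring).
    rewrite Hu. revert HTT. destruct T as [t1 t2], P1 as [x1 y1], P2 as [x2 y2].
    unfold Csub, Cadd, Copp, Cmul, Cdiv, Cinv, C1, RtoC; simpl. intro HTT.
    f_equal; field; simpl in HTT; intro Z; apply HTT; nra. }
  assert (HE' : E = A * A * B * D).
  { unfold E. rewrite <- Cmod_mul, HEq, !Cmod_mul. fold A B D. ring. }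
  rewrite HE'. apply Rmult_le_compat_l; [apply Rmult_le_pos; [apply Rmult_le_pos|]; lra | lra].
Qed.

Theorem lemma2 (a1 b1 a2 b2 : R) :
  0 < a1 -> 0 < b1 -> 0 < a2 -> 0 < b2 ->
  forall w : R, 0 <= w ->
    Cmod (Cmul (C1f a1 b1 a2 b2 (Cmul Cj (RtoC w)))
               (C2f a1 b1 a2 b2 (Cmul Cj (RtoC w)))) <= 1.
Proof.
  intros H1 H2 H3 H4 w Hw.
  unfold C1f, C2f, mf.
  apply core; unfold p_lin, Cmul, Cadd, RtoC, Cj; simpl; nra.
Qed.
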